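(* Let $\{f_n\}_{n\ge 0}$ be the Fine numbers, determined by $f_0=1$, $f_1=0$ and $2(n+1)f_n=(7n-5)f_{n-1}+2(2n-1)f_{n-2}$ for $n\ge 2$. Then the sequence $\{f_n\}_{n\ge 2}$ is log-convex.
   Context: The Fine number $f_n$ counts Dyck paths from $(0,0)$ to $(2n,0)$ with no hills; the recurrence given determines them ($f_2=1,f_3=2,f_4=6,f_5=18,\dots$). A sequence $a_0,a_1,\ldots$ of nonnegative real numbers is log-convex if $a_{k-1}a_{k+1}\ge a_k^2$ for all $k\ge 1$. *)

(* Defs.v *)
From mathcomp Require Import all_boot all_order all_algebra.
Set Implicit Arguments. Unset Strict Implicit. Unset Printing Implicit Defensive.
Import Order.TTheory GRing.Theory Num.Theory.
Local Open Scope ring_scope.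

(* fine_pair n = (f_n, f_{n+1}) *)
Fixpoint fine_pair (n : nat) : rat * rat :=
  match n with
  | 0%N => (1, 0)
  | m.+1 =>
      let (a, b) := fine_pair m in
      (* a = f_m, b = f_{m+1}; compute f_{m+2} with n' = m+2 *)
      (b, ((7 * (m.+2)%:R - 5) * b + 2 * (2 * (m.+2)%:R - 1) * a)
            / (2 * (m.+3)%:R))
  end.

Definition fine (n : nat) : rat := (fine_pair n).1.

Lemma fine0 : fine 0 = 1. Proof. by []. Qed.
Lemma fine1 : fine 1 = 0. Proof. by []. Qed.
Lemma fine_rec (n : nat) : (2 <= n)%N ->
  2 * (n.+1)%:R * fine n =
  (7 * n%:R - 5) * fine n.-1 + 2 * (2 * n%:R - 1) * fine n.-2.
Proof.
case: n => [|[|m]] //= _; rewrite /fine /=.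
case: (fine_pair m) => a b /=.
rewrite mulrC divfK //.
by rewrite mulf_neq0 // pnatr_eq0.
Qed.

Definition log_convex (a : nat -> rat) : Prop :=
  (forall k, 0 <= a k) /\ (forall k, (1 <= k)%N -> a k.-1 * a k.+1 >= a k ^+ 2).

(* Main.v *)
Require Import Defs.
From mathcomp Require Import all_boot all_order all_algebra.
From mathcomp Require Import ring lra.
Import Order.TTheory GRing.Theory Num.Theory.
Local Open Scope ring_scope.

Lemma step (x a b c : rat) : 3 <= x -> 0 < a ->
  (4 * x + 2) * a <= (x + 2) * b -> (x + 3) * b <= (4 * x + 6) * a ->
  2 * (x + 3) * c = (7 * x + 9) * b + (4 * x + 6) * a ->
  [/\ 0 < b, (4 * (x + 1) + 2) * b <= (x + 1 + 2) * c &
      (x + 1 + 3) * c <= (4 * (x + 1) + 6) * b].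
Proof.
move=> hx ha h1 h2 hc.
have hb : 0 < b by nra.
split => //.
- nra.
- set D := (x + 2) * b - (4 * x + 2) * a.
  have hD : 0 <= D by rewrite /D; lra.
  have key : 2 * (x + 3) * (4 * x + 2) * ((4 * (x + 1) + 6) * b - (x + 1 + 3) * c)
     = 42 * x * b + (x + 4) * (4 * x + 6) * D.
    have -> : 2 * (x + 3) * (4 * x + 2) * ((4 * (x + 1) + 6) * b - (x + 1 + 3) * c)
      = 2 * (x + 3) * (4 * x + 2) * (4 * (x + 1) + 6) * b
        - (4 * x + 2) * (x + 4) * (2 * (x + 3) * c) by ring.
    rewrite hc /D; ring.
  have pos : 0 <= 42 * x * b + (x + 4) * (4 * x + 6) * D.
    apply: addr_ge0; first by apply: mulr_ge0; lra.
    by apply: mulr_ge0 => //; apply: mulr_ge0; lra.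
  rewrite -key in pos.
  have hp : 0 < 2 * (x + 3) * (4 * x + 2) by apply: mulr_gt0; [apply: mulr_gt0|]; lra.
  rewrite pmulr_rge0 // in pos; lra.
Qed.

Lemma fine2 : fine 2 = 1.
Proof. have := fine_rec (n:=2) isT; rewrite /= fine1 fine0. lra. Qed.
Lemma fine3 : fine 3 = 2.
Proof. have := fine_rec (n:=3) isT; rewrite /= fine1 fine2. lra. Qed.
Lemma fine4 : fine 4 = 6.
Proof. have := fine_rec (n:=4) isT; rewrite /= fine3 fine2. lra. Qed.

Lemma inv k :
  [/\ 0 < fine (k + 3),
      (4 * (k + 3)%:R + 2) * fine (k + 3) <= ((k + 3)%:R + 2) * fine (k + 4)
    & ((k + 3)%:R + 3) * fine (k + 4) <= (4 * (k + 3)%:R + 6) * fine (k + 3)].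
Proof.
elim: k => [|k [h0 h1 h2]].
  rewrite /= fine3 fine4; split; lra.
have hx : 3 <= (k + 3)%:R :> rat by rewrite (ler_nat rat 3) leq_addl.
have hc := fine_rec (n := (k + 3).+2) isT.
rewrite !succnK in hc.
have N5 : ((k + 3).+3%:R : rat) = (k + 3)%:R + 3 by rewrite -(addn3 (k + 3)) natrD.
have N5' : ((k + 3).+2%:R : rat) = (k + 3)%:R + 2 by rewrite -(addn2 (k + 3)) natrD.
have F4 : ((k + 3).+1 = k + 4)%N by rewrite -(addn1 (k + 3)) -addnA.
have F5 : ((k + 3).+2 = k + 5)%N by rewrite -(addn2 (k + 3)) -addnA.
rewrite N5 N5' F5 F4 in hc.
have hc' : 2 * ((k + 3)%:R + 3) * fine (k + 5) =
   (7 * (k + 3)%:R + 9) * fine (k + 4) + (4 * (k + 3)%:R + 6) * fine (k + 3).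
  rewrite hc; ring.
have [p1 p2 p3] := @step _ _ _ _ hx h0 h1 h2 hc'.
have A3 : (k.+1 + 3 = k + 4)%N by rewrite addSn -(addn1 (k + 3)) -addnA.
have A4 : (k.+1 + 4 = k + 5)%N by rewrite addSn -(addn1 (k + 4)) -addnA.
have R : ((k.+1 + 3)%:R : rat) = (k + 3)%:R + 1 by rewrite A3 natr1 -(addn1 (k + 3)) -addnA.
by rewrite R A3 A4; split.
Qed.

Lemma fine_pos n : (2 <= n)%N -> 0 < fine n.
Proof.
move=> hn.
have [->|hn3] := eqVneq n 2%N; first by rewrite fine2.
have : (3 <= n)%N by rewrite ltn_neqAle eq_sym hn3 hn.
move/subnK => <-.
by have [h _ _] := inv (n - 3).
Qed.

Lemma lc_step (x a b c : rat) : 0 < a -> 0 < b ->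
  (x + 3) * b <= (4 * x + 6) * a -> (4 * x + 6) * b <= (x + 3) * c ->
  3 <= x -> b ^+ 2 <= a * c.
Proof.
move=> ha hb h1 h2 hx.
have e1 : (x + 3) * b * b <= (4 * x + 6) * a * b by rewrite ler_pM2r.
have e2 : (4 * x + 6) * b * a <= (x + 3) * c * a by rewrite ler_pM2r.
have e3 : (x + 3) * (b ^+ 2) <= (x + 3) * (a * c).
  have -> : (x + 3) * b ^+ 2 = (x + 3) * b * b by rewrite expr2 mulrA.
  have -> : (x + 3) * (a * c) = (x + 3) * c * a by ring.
  apply: le_trans e2; apply: le_trans e1 _; rewrite le_eqVlt; apply/orP; left; apply/eqP; ring.
by rewrite ler_pM2l in e3; lra.
Qed.

Theorem corollary3p2 : log_convex (fun k => fine k.+2).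
Proof.
split=> [k|k hk].
  have hp : 0 < fine k.+2 by apply: fine_pos.
  exact: (ltW hp).
destruct k as [|[|m]].
  exfalso; move: hk; apply/negP; exact: (negbT (ltnn 0)).
  have -> : fine 1.-1.+2 = 1 by exact: fine2.
  have -> : fine 1.+2 = 2 by exact: fine3.
  have -> : fine 1.+3 = 6 by exact: fine4.
  lra.
have [h0 h1 h2] := inv m.
have [p1 p2 p3] := inv m.+1.
rewrite !addn3 !addn4 in h0 h1 h2 p1 p2 p3.
change (fine m.+4 ^+ 2 <= fine m.+3 * fine m.+4.+1).
apply: (@lc_step ((m.+3)%:R)) => //.
- move: p2; rewrite -(natr1 (m.+3)) => p2. lra.
- by rewrite (ler_nat rat 3).
Qed.
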